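(* Let $(X,T)$ be a topological dynamical system and $c_S^n$ a system of coefficients for which the limits defining $\operatorname{Asc}$ and $\operatorname{Int}$ exist. For each open cover $\mathscr U$ of $X$, $\operatorname{Asc}(X,\mathscr U,T)\le h_{\mathrm{top}}(X,T)$, and moreover $\operatorname{Int}(X,\mathscr U,T)\le h_{\mathrm{top}}(X,\mathscr U,T)\le h_{\mathrm{top}}(X,T)$.
   Context: A system of coefficients is a family $\{c_S^n:n\in\mathbb N,S\subset n^*\}$ with $c_S^n\ge0$, $\sum_{S\subset n^*}c_S^n=1$, $c_{S^c}^n=c_S^n$, where $n^*=\{0,\dots,n-1\}$, $S^c=n^*\setminus S$ (the limits below exist e.g. when $c_S^n=\int x^{|S|}(1-x)^{n-|S|}\lambda(dx)$ for a symmetric probability measure $\lambda$ on $[0,1]$). $(X,T)$: compact Hausdorff, $T$ continuous; $\mathscr U_S=\bigvee_{i\in S}T^{-i}\mathscr U$; $N$ = minimal subcover cardinality. $\operatorname{Asc}(X,\mathscr U,T)=\lim_n\frac1n\sum_Sc_S^n\log N(\mathscr U_S)$, $\operatorname{Int}(X,\mathscr U,T)=\lim_n\frac1n\sum_Sc_S^n\log\frac{N(\mathscr U_S)N(\mathscr U_{S^c})}{N(\mathscr U_{n^*})}$, $h_{\mathrm{top}}(X,\mathscr U,T)=\lim_n\frac1n\log N(\mathscr U_{n^*})$, $h_{\mathrm{top}}(X,T)=\sup_{\mathscr U}h_{\mathrm{top}}(X,\mathscr U,T)$. *)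

(* Defs.v *)
From HB Require Import structures.
From mathcomp Require Import all_boot all_order all_algebra.
From mathcomp Require Import all_classical all_reals all_analysis.
Set Implicit Arguments. Unset Strict Implicit. Unset Printing Implicit Defensive.
Import Order.TTheory GRing.Theory Num.Theory numFieldNormedType.Exports.
Local Open Scope classical_set_scope.
Local Open Scope ring_scope.

Section Defs.
Variables (X : topologicalType).

Definition open_cover (U : set (set X)) : Prop :=
  (forall A, U A -> open A) /\ (forall x : X, exists2 A, U A & A x).

Definition has_subcover_of_size (V : set (set X)) (k : nat) : Prop :=
  exists s : seq (set X), size s = k /\ (forall A, A \in s -> V A) /\
    (forall x : X, exists2 A, A \in s & A x).

(* N(V): minimal cardinality of a (finite) subcover of V (0 by convention
   if V has no finite subcover, which never happens for open covers of a
   compact space). *)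
Definition Ncov (V : set (set X)) : nat :=
  match pselect (exists k, `[< has_subcover_of_size V k >]) with
  | left h => ex_minn h
  | right _ => 0%N
  end.

(* U_S = \/_{i in S} T^{-i} U, for S a subset of {0,...,n-1};
   the empty join is the trivial cover {X}. *)
Definition join_cover (T : X -> X) (U : set (set X)) (n : nat)
    (S : {set 'I_n}) : set (set X) :=
  [set V | exists f : 'I_n -> set X, (forall i, i \in S -> U (f i)) /\
     V = [set x | forall i : 'I_n, i \in S -> f i (iter i T x)]].

Variable R : realType.

Definition coef_system (c : forall n : nat, {set 'I_n} -> R) : Prop :=
  forall n : nat,
    (forall S, 0 <= c n S) /\ (\sum_(S : {set 'I_n}) c n S = 1) /\
    (forall S, c n (~: S) = c n S).

Definition NS (T : X -> X) (U : set (set X)) (n : nat) (S : {set 'I_n}) : R :=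
  (Ncov (join_cover T U S))%:R.

Definition asc_seq (c : forall n : nat, {set 'I_n} -> R) (T : X -> X)
    (U : set (set X)) (n : nat) : R :=
  n%:R^-1 * \sum_(S : {set 'I_n}) c n S * ln (NS T U S).

Definition int_seq (c : forall n : nat, {set 'I_n} -> R) (T : X -> X)
    (U : set (set X)) (n : nat) : R :=
  n%:R^-1 * \sum_(S : {set 'I_n}) c n S *
     ln (NS T U S * NS T U (~: S) / NS T U [set: 'I_n]).

Definition htop_seq (T : X -> X) (U : set (set X)) (n : nat) : R :=
  n%:R^-1 * ln (NS T U [set: 'I_n]).

Definition Asc c T U : R := limn (asc_seq c T U).
Definition Int c T U : R := limn (int_seq c T U).
Definition htop_cover T U : R := limn (htop_seq T U).
Definition htop (T : X -> X) : \bar R :=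
  ereal_sup [set (htop_cover T U)%:E | U in open_cover].
End Defs.

(* Main.v *)
Require Import Defs.
From HB Require Import structures.
From mathcomp Require Import all_boot all_order all_algebra.
From mathcomp Require Import all_classical all_reals all_analysis.
Import Order.TTheory GRing.Theory Num.Theory numFieldNormedType.Exports.
Local Open Scope classical_set_scope.
Local Open Scope ring_scope.
From mathcomp Require Import lra.
Definition ptd (X : topologicalType) (x0 : X) : Type := X.
HB.instance Definition _ (X : topologicalType) (x0 : X) := Topological.on (ptd X x0).
HB.instance Definition _ (X : topologicalType) (x0 : X) := isPointed.Build (ptd X x0) x0.
Lemma cc (X : topologicalType) (x0 : X) (A : set X) : compact A -> cover_compact A.
Proof. move=> cA. have := @compact_cover (ptd X x0). move=> e. have : compact (A : set (ptd X x0)) by []. rewrite e. by []. Qed.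

Section Cov.
Variable X : topologicalType.
Implicit Types (V : set (set X)).

Lemma Ncov_le V k : has_subcover_of_size V k -> (Ncov V <= k)%N.
Proof.
move=> h; rewrite /Ncov; case: pselect => [e|n]; last by [].
case: ex_minnP => m _; apply; exact/asboolP.
Qed.

Lemma Ncov_spec V k : has_subcover_of_size V k -> has_subcover_of_size V (Ncov V).
Proof.
move=> h; rewrite /Ncov; case: pselect => [e|n].
  by case: ex_minnP => m /asboolP.
by exfalso; apply: n; exists k; apply/asboolP.
Qed.

Definition jc (T : X -> X) (U : set (set X)) (n : nat) : set (set X) :=
  [set V | exists f : nat -> set X, (forall k, (k < n)%N -> U (f k)) /\
     V = [set x | forall k, (k < n)%N -> f k (iter k T x)]].

Lemma join_full T U n : join_cover T U [set: 'I_n] = jc T U n.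
Proof.
apply/seteqP; split => V /=.
- move=> [f [fU ->]].
  have fU' : forall i : 'I_n, U (f i) := fun i => fU i (finset.in_setT i).
  exists (fun k => if insub k is Some i then f i else set0); split.
  + move=> k kn; case: insubP => [i _ ik|]; last by rewrite kn.
    exact: fU'.
  + apply/seteqP; split => x /= hx.
    * move=> k kn; case: insubP => [i _ ik|]; last by rewrite kn.
      rewrite -ik; exact: hx i (finset.in_setT _).
    * move=> i _; have := hx i (ltn_ord i).
      case: insubP => [j _ ji|]; last by rewrite ltn_ord.
      by have -> : j = i by apply/val_inj.
- move=> [f [fU ->]]; exists (fun i : 'I_n => f i); split.
    by move=> i _; exact: fU.
  apply/seteqP; split => x /= hx.
    by move=> i _; exact: hx.
  by move=> k kn; exact: (hx (Ordinal kn) (finset.in_setT _)).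
Qed.

Lemma iter_cont (T : X -> X) : continuous T -> forall k, continuous (iter k T).
Proof.
move=> cT; elim => [|k IH] x /=; first exact: cvg_id.
exact: (continuous_comp (IH x) (cT _)).
Qed.

Lemma jc_cover T U n : open_cover U -> forall x, exists2 A : set X, jc T U n A & A x.
Proof.
move=> [_ hU] x.
have H : forall k, exists A, U A /\ A (iter k T x).
  by move=> k; have [A ? ?] := hU (iter k T x); exists A.
have [g hg] := choice H.
exists [set y | forall k, (k < n)%N -> g k (iter k T y)].
  by exists g; split => // k _; exact: (hg k).1.
by move=> k _; exact: (hg k).2.
Qed.

Lemma jc_open T U n : continuous T -> open_cover U -> forall A : set X, jc T U n A -> open A.
Proof.
move=> cT [oU _] V [f [fU ->]].
elim: n fU => [|n IH] fU.
  rewrite (_ : [set x | _] = setT); first exact: openT.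
  by apply/seteqP; split => x //= _ k.
rewrite (_ : [set x | _] = [set x | forall k, (k < n)%N -> f k (iter k T x)]
    `&` (iter n T @^-1` f n)).
  apply: openI.
    by apply: IH => k kn; apply: fU; apply: ltnW.
  apply: open_comp; last exact: oU (fU n (ltnSn n)).
  move=> y _; exact: iter_cont.
apply/seteqP; split => x /=.
  by move=> h; split; [move=> k kn; apply: h; apply: ltnW | exact: h].
move=> [h1 h2] k; rewrite ltnS leq_eqVlt => /orP [/eqP -> // | /h1 //].
Qed.

Lemma jc_sub T U n : compact [set: X] -> continuous T -> open_cover U ->
  exists k, has_subcover_of_size (jc T U n) k.
Proof.
move=> cX cT hU.
have [[x0 _]|X0] := pselect (exists x : X, True); last first.
  exists 0%N, [::]; split => //; split => // x; exfalso; apply: X0; by exists x.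
have {}cX := @cc X x0 _ cX.
have [D' sub cov] := cX (set X) (jc T U n) id (@jc_open T U n cT hU)
  (fun x _ => let: ex_intro2 V jV Vx := @jc_cover T U n hU x in ex_intro2 _ _ V jV Vx).
exists (size (finmap.enum_fset D')), (finmap.enum_fset D'); split => //; split.
  by move=> A As; have := sub A As; rewrite in_setE.
move=> x; have [A AD Ax] := cov x I; by exists A.
Qed.


Lemma jc_mul T U m n a b : has_subcover_of_size (jc T U m) a ->
  has_subcover_of_size (jc T U n) b -> has_subcover_of_size (jc T U (m + n)) (a * b).
Proof.
move=> [s [<- [sV scov]]] [t [<- [tV tcov]]].
have H : forall (p : nat) (A : set X), exists g : nat -> set X, jc T U p A ->
   (forall k, (k < p)%N -> U (g k)) /\ (forall x, A x -> forall k, (k < p)%N -> g k (iter k T x)).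
  move=> p A; case: (pselect (jc T U p A)) => [[g [gU eA]]|nj].
    by exists g => _; split => // x; rewrite eA.
  by exists (fun _ => set0).
have [F hF] := choice (H m); have [G hG] := choice (H n).
pose h A B k := if (k < m)%N then F A k else G B (k - m)%N.
pose p A B := [set x | forall k, (k < m + n)%N -> h A B k (iter k T x)].
exists [seq p A B | A <- s, B <- t]; split; first by rewrite size_allpairs.
split.
  move=> C /allpairsP [[A B] [/= As Bt ->]].
  exists (h A B); split => // k kmn; rewrite /h; case: ifP => km.
    exact: (hF A (sV A As)).1.
  apply: (hG B (tV B Bt)).1; rewrite ltn_subLR //; by rewrite leqNgt km.
move=> x; have [A As Ax] := scov x; have [B Bt Bx] := tcov (iter m T x).
exists (p A B); first by apply/allpairsP; exists (A, B).
move=> k kmn; rewrite /h; case: ifP => km.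
  exact: (hF A (sV A As)).2.
have mk : (m <= k)%N by rewrite leqNgt km.
have := (hG B (tV B Bt)).2 _ Bx (k - m)%N.
rewrite -iterD subnK //; apply; by rewrite ltn_subLR.
Qed.

Lemma join_sub (T : X -> X) (U : set (set X)) n (S : {set 'I_n}) k :
  has_subcover_of_size (join_cover T U [set: 'I_n]) k ->
  has_subcover_of_size (join_cover T U S) k.
Proof.
move=> [s [<- [sV scov]]].
have H : forall A : set X, exists W : set X, join_cover T U [set: 'I_n] A ->
   join_cover T U S W /\ A `<=` W.
  move=> A; case: (pselect (join_cover T U [set: 'I_n] A)) => [[f [fU ->]]|nj].
    exists [set x | forall i, i \in S -> f i (iter i T x)]; split.
      by exists f; split => // i _; exact: fU i (finset.in_setT i).
    by move=> x hx i _; exact: hx i (finset.in_setT i).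
  by exists set0.
have [g hg] := choice H.
exists (map g s); split; first by rewrite size_map.
split.
  by move=> C /mapP [A As ->]; exact: (hg A (sV A As)).1.
move=> x; have [A As Ax] := scov x; exists (g A); first exact: map_f.
exact: (hg A (sV A As)).2.
Qed.

End Cov.
Lemma subadd_iter (R : realType) (a : nat -> R) m :
  (forall m n, a (m + n)%N <= a m + a n) ->
  forall q r, a (q * m + r)%N <= q%:R * a m + a r.
Proof.
move=> sa; elim => [|q IH] r; first by rewrite mul0n add0n mul0r add0r.
rewrite mulSn -addnA; have := IH r; have := sa m (q * m + r)%N.
rewrite mulrSr mulrDl mul1r; lra.
Qed.

Lemma fekete (R : realType) (a : nat -> R) : (forall n, 0 <= a n) ->
  (forall m n, a (m + n)%N <= a m + a n) -> cvgn (fun n => n%:R^-1 * a n).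
Proof.
move=> a0 sa.
pose E := [set y : R | exists2 n, (0 < n)%N & y = n%:R^-1 * a n].
have lbE : has_lbound E.
  exists 0 => y [n _ ->]; by rewrite mulr_ge0 // invr_ge0.
have hiE : has_inf E by split => //; exists (1%:R^-1 * a 1%N), 1%N.
apply/cvg_ex; exists (inf E); apply/cvgrPdist_lt => e e0.
have e20 : 0 < e / 2 by rewrite divr_gt0.
have [y [m m0 ->] ym] := inf_adherent e20 hiE.
pose M := \sum_(r < m) a r.
have aM : forall r, (r < m)%N -> a r <= M.
  move=> r rm; rewrite /M (bigD1 (Ordinal rm)) //= lerDl.
  by apply: sumr_ge0 => i _.
have M0 : 0 <= M by apply: sumr_ge0.
pose N0 := (Num.truncn (M / (e / 2))).+1.
exists N0 => // n /= Nn.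
have n0 : (0 < n)%N by apply: leq_trans Nn.
have n0R : 0 < n%:R :> R by rewrite ltr0n.
have m0R : 0 < m%:R :> R by rewrite ltr0n.
have Ln : inf E <= n%:R^-1 * a n by apply: ge_inf => //; exists n.
rewrite distrC ger0_norm ?subr_ge0 //.
have hn : a n <= (n %/ m)%:R * a m + M.
  rewrite {1}(divn_eq n m) (le_trans (@subadd_iter _ a m sa _ _)) // lerD2l.
  by apply: aM; rewrite ltn_mod.
have q1 : (n %/ m)%:R / n%:R <= m%:R^-1 :> R.
  rewrite ler_pdivrMr // mulrC ler_pdivlMr // -natrM ler_nat; exact: leq_divM.
have h1 : n%:R^-1 * a n <= n%:R^-1 * ((n %/ m)%:R * a m + M).
  by rewrite ler_wpM2l // invr_ge0 ler0n.
have h2 : n%:R^-1 * ((n %/ m)%:R * a m) = ((n %/ m)%:R / n%:R) * a m.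
  by rewrite mulrA [n%:R^-1 * _]mulrC.
have h3 : ((n %/ m)%:R / n%:R) * a m <= m%:R^-1 * a m by rewrite ler_wpM2r.
have h4 : n%:R^-1 * M < e / 2.
  have t := truncnS_gt (M / (e / 2)).
  have t2 : (M / (e / 2)) < n%:R.
    by apply: (lt_le_trans t); rewrite ler_nat.
  move: t2; rewrite ltr_pdivrMr // => t2.
  by rewrite mulrC ltr_pdivrMr // mulrC.
move: h1; rewrite mulrDr h2 => h1.
lra.
Qed.

Section Main.
Variables (R : realType) (X : topologicalType) (T : X -> X) (U : set (set X)).
Hypotheses (cX : compact [set: X]) (cT : continuous T) (hU : open_cover U).

Lemma ex_full n : exists k, has_subcover_of_size (join_cover T U [set: 'I_n]) k.
Proof. by rewrite join_full; exact: jc_sub. Qed.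

Lemma NS_le n (S : {set 'I_n}) : NS R T U S <= NS R T U [set: 'I_n].
Proof.
rewrite /NS ler_nat; apply: Ncov_le; apply: join_sub.
have [k hk] := ex_full n; exact: Ncov_spec hk.
Qed.

Lemma Nmul m n : (Ncov (join_cover T U [set: 'I_(m + n)]) <=
  Ncov (join_cover T U [set: 'I_m]) * Ncov (join_cover T U [set: 'I_n]))%N.
Proof.
rewrite !join_full; apply: Ncov_le; apply: jc_mul.
  by have [k hk] := ex_full m; move: hk; rewrite join_full; exact: Ncov_spec.
by have [k hk] := ex_full n; move: hk; rewrite join_full; exact: Ncov_spec.
Qed.

Lemma lnN_ge0 (k : nat) : 0 <= ln (k%:R : R).
Proof.
case: k => [|k]; first by rewrite ln0.
by apply: ln_ge0; rewrite ler1n.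
Qed.

Lemma ln_le_nat (x : R) (k : nat) : x <= k%:R -> ln x <= ln (k%:R : R).
Proof.
move=> xk; case: (leP x 0) => [x0|x0]; first by rewrite ln0 // lnN_ge0.
have k0 : 0 < k%:R :> R by apply: lt_le_trans xk.
by rewrite ler_ln // posrE.
Qed.

Lemma htop_cvg : cvgn (htop_seq R T U).
Proof.
apply: (@fekete R (fun n => ln (NS R T U [set: 'I_n]))).
  by move=> n; exact: lnN_ge0.
move=> m n; rewrite /NS.
have h := Nmul m n.
set p := Ncov (join_cover T U [set: 'I_m]) in h *.
set q := Ncov (join_cover T U [set: 'I_n]) in h *.
set r := Ncov (join_cover T U [set: 'I_(m + n)]) in h *.
have [p0|p0] := posnP p.
  move: h; rewrite p0 mul0n leqn0 => /eqP ->.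
  by rewrite ln0 // addr_ge0 // lnN_ge0.
have [q0|q0] := posnP q.
  move: h; rewrite q0 muln0 leqn0 => /eqP ->.
  by rewrite ln0 // addr_ge0 // lnN_ge0.
rewrite -lnM ?posrE ?ltr0n // -natrM; apply: ln_le_nat; by rewrite ler_nat.
Qed.

Lemma abN (a b N : R) : 0 <= a -> 0 <= b -> a <= N -> b <= N -> a * b / N <= N.
Proof.
move=> a0 b0 aN bN.
have [N0|N0] := eqVneq N 0; first by rewrite N0 invr0 mulr0.
apply: (@le_trans _ _ (N * N / N)); last by rewrite mulfK.
by rewrite ler_wpM2r ?invr_ge0 ?(le_trans a0) // ler_pM.
Qed.

Lemma int_le c n : coef_system c -> int_seq c T U n <= htop_seq R T U n.
Proof.
move=> /(_ n) [c0 [c1 _]].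
rewrite /int_seq /htop_seq; apply: ler_wpM2l; first by rewrite invr_ge0 ler0n.
apply: (@le_trans _ _ (\sum_(S : {set 'I_n}) c n S * ln (NS R T U [set: 'I_n]))).
  apply: ler_sum => S _; apply: ler_wpM2l => //.
  apply: ln_le_nat.
  apply: abN; [exact: ler0n | exact: ler0n | exact: NS_le | exact: NS_le].
by rewrite -mulr_suml c1 mul1r.
Qed.

Lemma asc_le c n : coef_system c -> asc_seq c T U n <= htop_seq R T U n.
Proof.
move=> /(_ n) [c0 [c1 _]].
rewrite /asc_seq /htop_seq; apply: ler_wpM2l; first by rewrite invr_ge0 ler0n.
apply: (@le_trans _ _ (\sum_(S : {set 'I_n}) c n S * ln (NS R T U [set: 'I_n]))).
  apply: ler_sum => S _; apply: ler_wpM2l => //.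
  by apply: ln_le_nat; exact: NS_le.
by rewrite -mulr_suml c1 mul1r.
Qed.

End Main.

Theorem proposition2p10 (R : realType) (X : topologicalType) (T : X -> X)
  (c : forall n : nat, {set 'I_n} -> R) (U : set (set X)) :
  compact [set: X] -> hausdorff_space X -> continuous T ->
  coef_system c -> open_cover U ->
  cvgn (asc_seq c T U) -> cvgn (int_seq c T U) ->
  ((Asc c T U)%:E <= htop R T)%E /\
  Int c T U <= htop_cover R T U /\ ((htop_cover R T U)%:E <= htop R T)%E.
Proof.
move=> cX _ cT hc hU ca ci.
have hh := @htop_cvg R X T U cX cT hU.
have h3 : ((htop_cover R T U)%:E <= htop R T)%E.
  by apply: ereal_sup_ubound; exists U.
split; last split => //.
  apply: le_trans h3; rewrite lee_fin; apply: ler_lim => //.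
  by apply: nearW => n; exact: (@asc_le R X T U cX cT hU c n hc).
apply: ler_lim => //; apply: nearW => n; exact: (@int_le R X T U cX cT hU c n hc).
Qed.
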